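(* Let $a\in\mathbb{D}\setminus\{0\}$ and let $\alpha,\beta,\gamma\in\mathbb{C}$ with $\alpha\ne0$, $\gamma\neq0$. If $g=\alpha z+\beta+\gamma K_a$ is $\mathcal{H}^2_{\omega}$-inner, then $g(a)=0$, $g(0)=0$ (i.e. $\beta+\gamma=0$), and $g$ is a unimodular constant multiple of $$B_2(z)=\frac{(1-K_a(a))z-a(1-K_a(z))}{\sqrt{(K_a(a)-1)\big((K_a(a)-1)\omega_1-|a|^2\big)}},$$ where the denominator equals $\|(1-K_a(a))z-a(1-K_a)\|_{\mathcal{H}^2_{\omega}}$.
   Context: Let $\omega=\{\omega_n\}_{n\geq 0}$ be a sequence of positive reals with $\omega_0=1$ and $\lim_{n\to\infty}\omega_{n+1}/\omega_n=1$. $\mathcal{H}^2_{\omega}$ is the Hilbert space of power series $f(z)=\sum_{n\ge0}a_nz^n$ with $\|f\|^2=\sum_{n\geq0}\omega_n|a_n|^2<\infty$ and inner product $\langle f,g\rangle=\sum_n\omega_na_n\overline{b_n}$; its reproducing kernel on $\mathbb{D}$ is $K_\lambda(z)=\sum_{n\ge0}\overline{\lambda}^nz^n/\omega_n$. A function $f$ is $\mathcal{H}^2_{\omega}$-inner if $\|f\|=1$ and $\langle z^mf,f\rangle=0$ for all integers $m\geq1$. *)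

(* Defs.v *)
From Stdlib Require Import Reals Lra Arith ClassicalEpsilon.
Open Scope R_scope.

Definition Cx : Type := (R * R)%type.
Definition RtoC (x : R) : Cx := (x, 0).
Definition C0 : Cx := (0, 0).
Definition C1 : Cx := (1, 0).
Definition Cadd (z w : Cx) : Cx := (fst z + fst w, snd z + snd w).
Definition Copp (z : Cx) : Cx := (- fst z, - snd z).
Definition Csub (z w : Cx) : Cx := Cadd z (Copp w).
Definition Cmul (z w : Cx) : Cx :=
  (fst z * fst w - snd z * snd w, fst z * snd w + snd z * fst w).
Definition Cconj (z : Cx) : Cx := (fst z, - snd z).
Definition Cnorm2 (z : Cx) : R := fst z * fst z + snd z * snd z.
Definition Cmod (z : Cx) : R := sqrt (Cnorm2 z).
Fixpoint Cpow (z : Cx) (n : nat) : Cx :=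
  match n with O => C1 | S k => Cmul z (Cpow z k) end.
Definition Cscal (r : R) (z : Cx) : Cx := (r * fst z, r * snd z).

Definition Csum_is (u : nat -> Cx) (s : Cx) : Prop :=
  infinite_sum (fun n => fst (u n)) (fst s) /\ infinite_sum (fun n => snd (u n)) (snd s).

Definition Rseries_val (u : nat -> R) : R :=
  epsilon (inhabits 0) (fun l => infinite_sum u l).

(** * The space H^2_omega: a power series is its coefficient sequence [f : nat -> Cx]. *)

Definition eval_is (f : nat -> Cx) (z : Cx) (s : Cx) : Prop :=
  Csum_is (fun n => Cmul (f n) (Cpow z n)) s.

Definition hnorm (w : nat -> R) (f : nat -> Cx) : R :=
  sqrt (Rseries_val (fun n => w n * Cnorm2 (f n))).

Definition inner_is (w : nat -> R) (f g : nat -> Cx) (c : Cx) : Prop :=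
  Csum_is (fun n => Cscal (w n) (Cmul (f n) (Cconj (g n)))) c.

Definition zshift (m : nat) (f : nat -> Cx) : nat -> Cx :=
  fun n => if Nat.leb m n then f (n - m)%nat else C0.

Definition is_inner (w : nat -> R) (f : nat -> Cx) : Prop :=
  infinite_sum (fun n => w n * Cnorm2 (f n)) 1 /\
  forall m : nat, (1 <= m)%nat -> inner_is w (zshift m f) f C0.

(** Reproducing kernel K_lambda(z) = sum conj(lambda)^n z^n / omega_n (coefficients). *)
Definition Kcoef (w : nat -> R) (lam : Cx) : nat -> Cx :=
  fun n => Cscal (/ w n) (Cpow (Cconj lam) n).

Definition zcoef : nat -> Cx := fun n => if Nat.eqb n 1 then C1 else C0.
Definition onecoef : nat -> Cx := fun n => if Nat.eqb n 0 then C1 else C0.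

Definition Kaa (w : nat -> R) (a : Cx) : R :=
  Rseries_val (fun n => Cnorm2 a ^ n / w n).

Definition gcoef (w : nat -> R) (a alpha beta gamma : Cx) : nat -> Cx :=
  fun n => Cadd (Cadd (Cmul alpha (zcoef n)) (Cmul beta (onecoef n)))
                (Cmul gamma (Kcoef w a n)).

Definition B2num (w : nat -> R) (a : Cx) : nat -> Cx :=
  fun n => Csub (Cmul (RtoC (1 - Kaa w a)) (zcoef n))
                (Cmul a (Csub (onecoef n) (Kcoef w a n))).

Definition B2den (w : nat -> R) (a : Cx) : R :=
  sqrt ((Kaa w a - 1) * ((Kaa w a - 1) * w 1%nat - Cnorm2 a)).

Definition B2coef (w : nat -> R) (a : Cx) : nat -> Cx :=
  fun n => Cscal (/ B2den w a) (B2num w a n).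

(* Main.v *)
Require Import Defs.
From Stdlib Require Import Reals Lra Lia Psatz Arith ClassicalEpsilon.
From Coquelicot Require Import Hierarchy Series Rcomplements.
Open Scope R_scope.

Lemma rs_ext u v l : (forall n, u n = v n) -> infinite_sum u l -> infinite_sum v l.
Proof. intros H H1. apply is_series_Reals. apply is_series_ext with u; auto.
  apply is_series_Reals; auto. Qed.

Lemma rs_plus u v a b : infinite_sum u a -> infinite_sum v b ->
  infinite_sum (fun n => u n + v n) (a + b).
Proof. intros H1 H2. apply is_series_Reals in H1. apply is_series_Reals in H2.
  apply is_series_Reals. exact (is_series_plus _ _ _ _ H1 H2). Qed.

Lemma rs_scal c u a : infinite_sum u a -> infinite_sum (fun n => c * u n) (c * a).
Proof. intros H1. apply is_series_Reals in H1.
  apply is_series_Reals. exact (is_series_scal c _ _ H1). Qed.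

Lemma rs_uniq u a b : infinite_sum u a -> infinite_sum u b -> a = b.
Proof. intros H1 H2. apply is_series_Reals in H1. apply is_series_Reals in H2.
  apply is_series_unique in H1. apply is_series_unique in H2. congruence. Qed.

Lemma rs_shift1 v s : infinite_sum v s ->
  infinite_sum (fun n => match n with O => 0 | S k => v k end) s.
Proof. intros H. apply is_series_Reals in H. apply is_series_Reals.
  apply is_series_decr_1.
  change (plus s (opp 0)) with (s + - 0). rewrite Ropp_0, Rplus_0_r. exact H. Qed.

Lemma rs_shift m v s : infinite_sum v s ->
  infinite_sum (fun n => if Nat.leb m n then v (n - m)%nat else 0) s.
Proof. revert v s; induction m; intros v s H.
  - apply rs_ext with v; auto. intros n. simpl. rewrite Nat.sub_0_r. reflexivity.
  - apply IHm in H. apply rs_shift1 in H. apply rs_ext with (2 := H).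
    intros [|n]; reflexivity. Qed.

Lemma rs_single0 d : infinite_sum (fun n => if Nat.eqb n 0 then d else 0) d.
Proof. assert (Hs : forall n, sum_f_R0 (fun n => if Nat.eqb n 0 then d else 0) n = d).
  { induction n; simpl; auto. rewrite IHn. ring. }
  intros eps He. exists 0%nat. intros n _. rewrite Hs. unfold R_dist.
  rewrite Rminus_diag, Rabs_R0. auto. Qed.

Lemma rs_single k d : infinite_sum (fun n => if Nat.eqb n k then d else 0) d.
Proof. pose proof (rs_shift k _ _ (rs_single0 d)) as H. apply rs_ext with (2 := H).
  intros n. destruct (Nat.leb_spec k n); destruct (Nat.eqb_spec n k);
  try (destruct (Nat.eqb_spec (n - k) 0)); try lia; reflexivity. Qed.

Ltac cx := repeat match goal with | z : Cx |- _ => destruct z end;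
  unfold Defs.Csub, Defs.Cadd, Defs.Copp, Defs.Cmul, Defs.Cscal, Defs.Cconj, Defs.Cnorm2, Defs.C0, Defs.C1, Defs.RtoC in *; simpl in *.

Definition ainv (a : Cx) : Cx := Cscal (/ Cnorm2 a) (Cconj a).

Lemma conj_pow z n : Cconj (Cpow z n) = Cpow (Cconj z) n.
Proof. induction n; simpl. - cx. f_equal; ring. - rewrite <- IHn.
  generalize (Cpow z n). intros. cx. f_equal; ring. Qed.

Lemma conj_conj z : Cconj (Cconj z) = z.
Proof. cx. f_equal; ring. Qed.

Lemma norm_mul z w : Cnorm2 (Cmul z w) = Cnorm2 z * Cnorm2 w.
Proof. cx. ring. Qed.
Lemma norm_scal s z : Cnorm2 (Cscal s z) = s * s * Cnorm2 z.
Proof. cx. ring. Qed.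
Lemma norm_conj z : Cnorm2 (Cconj z) = Cnorm2 z.
Proof. cx. ring. Qed.
Lemma norm_pow z n : Cnorm2 (Cpow z n) = Cnorm2 z ^ n.
Proof. induction n; simpl. - cx. ring. - rewrite norm_mul, IHn. ring. Qed.

Lemma Cmul4 p q r s : Cmul (Cmul p q) (Cmul r s) = Cmul (Cmul p r) (Cmul q s).
Proof. cx. f_equal; ring. Qed.

Lemma pow_conj_mul z n : Cmul (Cpow (Cconj z) n) (Cpow z n) = RtoC (Cnorm2 z ^ n).
Proof. induction n; simpl. - cx. f_equal; ring.
  - rewrite Cmul4, IHn. cx. f_equal; ring. Qed.

Lemma Cnz z : z <> C0 -> 0 < Cnorm2 z.
Proof. intros H. destruct z as [x y]. unfold Cnorm2; simpl.
  destruct (Req_dec x 0); destruct (Req_dec y 0); subst.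
  - exfalso; apply H; reflexivity.
  - nra. - nra. - nra. Qed.

Lemma Cnorm0 z : Cnorm2 z = 0 -> z = C0.
Proof. destruct z as [x y]. unfold Cnorm2, C0; simpl. intros H.
  assert (x = 0) by nra. assert (y = 0) by nra. subst; reflexivity. Qed.

Lemma Cmul_eq0 z w : Cmul z w = C0 -> z <> C0 -> w = C0.
Proof. intros H Hz. apply Cnorm0. apply Cnz in Hz.
  assert (Cnorm2 (Cmul z w) = 0) by (rewrite H; unfold Cnorm2, C0; simpl; ring).
  rewrite norm_mul in H0. assert (0 <= Cnorm2 w) by (destruct w; unfold Cnorm2; simpl; nra).
  nra. Qed.

Lemma Cmul_comm z w : Cmul z w = Cmul w z.
Proof. cx. f_equal; ring. Qed.

Lemma Cnz_mul z w : z <> C0 -> w <> C0 -> Cmul z w <> C0.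
Proof. intros Hz Hw H. apply Cmul_eq0 in H; auto. Qed.

Lemma Cnz_conj z : z <> C0 -> Cconj z <> C0.
Proof. intros H H1. apply H. rewrite <- (conj_conj z), H1. cx. f_equal; ring. Qed.

Lemma Cnz_pow z n : z <> C0 -> Cpow z n <> C0.
Proof. intros H. induction n; simpl.
  - unfold Defs.C1, Defs.C0. intros E. injection E. lra.
  - apply Cnz_mul; auto. Qed.

Lemma cs_ext u v l : (forall n, u n = v n) -> Csum_is u l -> Csum_is v l.
Proof. intros H [H1 H2]. split.
  - apply rs_ext with (2 := H1). intros; rewrite H; auto.
  - apply rs_ext with (2 := H2). intros; rewrite H; auto. Qed.

Lemma cs_plus u v a b : Csum_is u a -> Csum_is v b ->
  Csum_is (fun n => Cadd (u n) (v n)) (Cadd a b).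
Proof. intros [H1 H2] [H3 H4]. split; simpl; apply rs_plus; auto. Qed.

Lemma cs_mul c u a : Csum_is u a -> Csum_is (fun n => Cmul c (u n)) (Cmul c a).
Proof. intros [H1 H2]. split; simpl.
  - replace (fst c * fst a - snd c * snd a)
    with (fst c * fst a + - snd c * snd a) by ring.
    apply rs_ext with (2 := rs_plus _ _ _ _ (rs_scal (fst c) _ _ H1) (rs_scal (- snd c) _ _ H2)).
    intros; ring.
  - apply rs_ext with (2 := rs_plus _ _ _ _ (rs_scal (fst c) _ _ H2) (rs_scal (snd c) _ _ H1)).
    intros; ring. Qed.

Lemma cs_uniq u a b : Csum_is u a -> Csum_is u b -> a = b.
Proof. intros [H1 H2] [H3 H4]. destruct a, b; simpl in *.
  f_equal; eapply rs_uniq; eauto. Qed.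

Lemma cs_shift m v s : Csum_is v s ->
  Csum_is (fun n => if Nat.leb m n then v (n - m)%nat else C0) s.
Proof. intros [H1 H2]. split.
  - apply rs_ext with (2 := rs_shift m _ _ H1). intros n; destruct (Nat.leb m n); reflexivity.
  - apply rs_ext with (2 := rs_shift m _ _ H2). intros n; destruct (Nat.leb m n); reflexivity.
Qed.

Lemma cs_single k d : Csum_is (fun n => if Nat.eqb n k then d else C0) d.
Proof. split.
  - apply rs_ext with (2 := rs_single k (fst d)). intros n; destruct (Nat.eqb n k); reflexivity.
  - apply rs_ext with (2 := rs_single k (snd d)). intros n; destruct (Nat.eqb n k); reflexivity.
Qed.

Lemma cs_real u l : infinite_sum u l -> Csum_is (fun n => RtoC (u n)) (RtoC l).
Proof. intros H. split; simpl; auto.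
  pose proof (rs_scal 0 _ _ H) as H0. rewrite Rmult_0_l in H0.
  apply rs_ext with (2 := H0). intros; ring. Qed.

Lemma g0_eq w a al be ga : w 0%nat = 1 -> gcoef w a al be ga 0 = Cadd be ga.
Proof. intros h. unfold gcoef, zcoef, onecoef, Kcoef. simpl. rewrite h, Rinv_1.
  cx. f_equal; ring. Qed.

Lemma g1_eq w a al be ga :
  gcoef w a al be ga 1 = Cadd al (Cmul ga (Cscal (/ w 1%nat) (Cconj a))).
Proof. unfold gcoef, zcoef, onecoef, Kcoef. simpl. cx. f_equal; ring. Qed.

Lemma gSS_eq w a al be ga k :
  gcoef w a al be ga (S (S k)) = Cmul ga (Kcoef w a (S (S k))).
Proof. unfold gcoef, zcoef, onecoef. simpl. generalize (Kcoef w a (S (S k))).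
  intros. cx. f_equal; ring. Qed.

Lemma wconj w a ga n : 0 < w n ->
  Cscal (w n) (Cconj (Cmul ga (Kcoef w a n))) = Cmul (Cconj ga) (Cpow a n).
Proof. intros hw. unfold Kcoef. rewrite <- (conj_conj a) at 2. rewrite <- conj_pow.
  rewrite conj_conj. generalize (Cpow a n). intros. cx. f_equal; field; lra. Qed.

Lemma Cscal_mul_r s x y : Cscal s (Cmul x y) = Cmul x (Cscal s y).
Proof. cx. f_equal; ring. Qed.

Lemma term2 w a al be ga n : (forall n, 0 < w n) ->
  Cscal (w n) (Cmul (zshift 2 (gcoef w a al be ga) n) (Cconj (gcoef w a al be ga n))) =
  Cmul (Cmul (Cconj ga) (Cpow a 2))
    (if Nat.leb 2 n then Cmul (gcoef w a al be ga (n - 2)) (Cpow a (n - 2)) else C0).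
Proof. intros hw. destruct n as [|[|k]].
  - unfold zshift; simpl. generalize (gcoef w a al be ga 0). intros. cx. f_equal; ring.
  - unfold zshift; simpl. generalize (gcoef w a al be ga 1). intros. cx. f_equal; ring.
  - unfold zshift. cbn [Nat.leb Nat.sub]. try rewrite Nat.sub_0_r. rewrite (gSS_eq w a al be ga k).
    rewrite Cscal_mul_r, wconj by auto. cbn [Cpow].
    generalize (gcoef w a al be ga k) (Cpow a k). intros. cx. f_equal; ring.
Qed.

Lemma term1 w a al be ga n : (forall n, 0 < w n) ->
  Cscal (w n) (Cmul (zshift 1 (gcoef w a al be ga) n) (Cconj (gcoef w a al be ga n))) =
  Cadd (Cmul (Cmul (Cconj ga) a)
    (if Nat.leb 1 n then Cmul (gcoef w a al be ga (n - 1)) (Cpow a (n - 1)) else C0))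
    (if Nat.eqb n 1 then Cmul (gcoef w a al be ga 0) (Cscal (w 1%nat) (Cconj al)) else C0).
Proof. intros hw. destruct n as [|[|k]].
  - unfold zshift; simpl. generalize (gcoef w a al be ga 0). intros. cx. f_equal; ring.
  - unfold zshift; cbn [Nat.leb Nat.sub Nat.eqb Cpow]. rewrite g1_eq.
    pose proof (hw 1%nat).
    generalize (gcoef w a al be ga 0). intros. cx. f_equal; field; lra.
  - unfold zshift. cbn [Nat.leb Nat.sub Nat.eqb]. try rewrite Nat.sub_0_r.
    rewrite (gSS_eq w a al be ga k).
    rewrite Cscal_mul_r, wconj by auto. cbn [Cpow].
    generalize (gcoef w a al be ga (S k)) (Cpow a k). intros. cx. f_equal; ring.
Qed.

Lemma Cmul_addl x y p : Cmul (Cadd x y) p = Cadd (Cmul x p) (Cmul y p).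
Proof. cx. f_equal; ring. Qed.
Lemma Cmul_assoc x y p : Cmul (Cmul x y) p = Cmul x (Cmul y p).
Proof. cx. f_equal; ring. Qed.
Lemma Cmul_scal_l s x y : Cmul (Cscal s x) y = Cscal s (Cmul x y).
Proof. cx. f_equal; ring. Qed.

Lemma Kpow w a n : Cmul (Kcoef w a n) (Cpow a n) = RtoC (Cnorm2 a ^ n / w n).
Proof. unfold Kcoef. rewrite Cmul_scal_l, pow_conj_mul.
  generalize (Cnorm2 a ^ n). intros. cx. f_equal; unfold Rdiv; ring. Qed.

Lemma eval_series w a al be ga K : infinite_sum (fun n => Cnorm2 a ^ n / w n) K ->
  Csum_is (fun n => Cmul (gcoef w a al be ga n) (Cpow a n))
    (Cadd (Cadd (Cmul al a) be) (Cmul ga (RtoC K))).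
Proof. intros HK.
  apply cs_ext with (u := fun n => Cadd (Cadd (if Nat.eqb n 1 then Cmul al a else C0)
     (if Nat.eqb n 0 then be else C0)) (Cmul ga (RtoC (Cnorm2 a ^ n / w n)))).
  2: { apply cs_plus. apply cs_plus; apply cs_single. apply cs_mul. apply cs_real; auto. }
  intros n. unfold gcoef. rewrite !Cmul_addl, !Cmul_assoc, Kpow.
  generalize (RtoC (Cnorm2 a ^ n / w n)). intros t.
  destruct n as [|[|k]]; unfold zcoef, onecoef; cbn [Nat.eqb Cpow];
  try generalize (Cpow a k); intros; cx; f_equal; ring.
Qed.

Lemma B2num_SS w a k : B2num w a (S (S k)) = Cmul a (Kcoef w a (S (S k))).
Proof. unfold B2num, zcoef, onecoef. cbn [Nat.eqb]. generalize (Kcoef w a (S (S k))).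
  generalize (Kaa w a). intros. cx. f_equal; ring. Qed.

Lemma normK w a n : 0 < w n -> w n * Cnorm2 (Kcoef w a n) = Cnorm2 a ^ n / w n.
Proof. intros h. unfold Kcoef. rewrite norm_scal, norm_pow, norm_conj. field. lra. Qed.

Lemma norm_series w a : (forall n, 0 < w n) -> w 0%nat = 1 ->
  infinite_sum (fun n => Cnorm2 a ^ n / w n) (Kaa w a) ->
  infinite_sum (fun n => w n * Cnorm2 (B2num w a n))
    ((Kaa w a - 1) * ((Kaa w a - 1) * w 1%nat - Cnorm2 a)).
Proof. intros hw h0 HK. set (r := Cnorm2 a). set (K := Kaa w a).
  set (w1 := w 1%nat).
  apply rs_ext with (u := fun n => r * (r ^ n / w n) + ((if Nat.eqb n 0 then - r else 0) +
     (if Nat.eqb n 1 then w1 * (1 - K + r / w1) ^ 2 - r * (r / w1) else 0))).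
  2: { pose proof (rs_plus _ _ _ _ (rs_scal r _ _ HK)
        (rs_plus _ _ _ _ (rs_single 0 (- r)) (rs_single 1 (w1 * (1 - K + r / w1) ^ 2 - r * (r / w1))))) as H.
       replace ((K - 1) * ((K - 1) * w1 - r)) with
         (r * Kaa w a + (- r + (w1 * (1 - K + r / w1) ^ 2 - r * (r / w1)))).
       exact H. unfold K. pose proof (hw 1%nat). unfold w1. field. lra. }
  intros n. destruct n as [|[|k]]; cbn [Nat.eqb].
  - unfold B2num, Kcoef, zcoef, onecoef. cbn [Nat.eqb Cpow]. rewrite h0, Rinv_1.
    unfold r, K. generalize (Kaa w a). intros. cx. field.
  - unfold B2num, Kcoef, zcoef, onecoef. cbn [Nat.eqb Cpow].
    pose proof (hw 1%nat). unfold r, K, w1 in *. generalize (Kaa w a). intros. cx. field. lra.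
  - rewrite B2num_SS, norm_mul, <- Rmult_assoc, (Rmult_comm (w _)), Rmult_assoc, normK by auto.
    unfold r. ring.
Qed.

Lemma a_ainv a : a <> C0 -> Cmul a (ainv a) = Defs.C1.
Proof. intros h. apply Cnz in h. unfold ainv. cx. f_equal; field; lra. Qed.

Lemma alpha_eq a al be ga K : a <> C0 ->
  Cadd (Cadd (Cmul al a) be) (Cmul ga (RtoC K)) = C0 -> Cadd be ga = C0 ->
  al = Cmul (Cmul ga (RtoC (1 - K))) (ainv a).
Proof. intros ha H1 H2.
  assert (E : Cmul al a = Cmul ga (RtoC (1 - K))).
  { clear ha. cx. injection H1; injection H2; intros. f_equal; nra. }
  rewrite <- E, Cmul_assoc, a_ainv by auto. cx. f_equal; ring. Qed.

Lemma g_B2 w a al be ga : (forall n, 0 < w n) -> w 0%nat = 1 -> a <> C0 ->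
  al = Cmul (Cmul ga (RtoC (1 - Kaa w a))) (ainv a) -> be = Copp ga ->
  forall n, gcoef w a al be ga n = Cmul (Cmul ga (ainv a)) (B2num w a n).
Proof. intros hw h0 ha Hal Hbe n. apply Cnz in ha.
  destruct n as [|[|k]].
  - rewrite g0_eq by auto. unfold B2num, Kcoef, zcoef, onecoef. cbn [Nat.eqb Cpow].
    rewrite h0, Rinv_1. subst be. generalize (Kaa w a). intros. unfold ainv. cx. f_equal; ring.
  - rewrite g1_eq. unfold B2num, Kcoef, zcoef, onecoef. cbn [Nat.eqb Cpow]. subst al.
    pose proof (hw 1%nat). generalize (Kaa w a). intros. unfold ainv. cx. f_equal; field; lra.
  - rewrite gSS_eq, B2num_SS. rewrite <- Cmul_assoc, (Cmul_assoc ga), (Cmul_comm (ainv a) a),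
      a_ainv. 2: { intros E; rewrite E in ha; unfold Cnorm2, C0 in ha; simpl in ha; lra. }
    generalize (Kcoef w a (S (S k))). intros. cx. f_equal; ring.
Qed.

Lemma gnormSS w a al be ga k : 0 < w (S (S k)) ->
  w (S (S k)) * Cnorm2 (gcoef w a al be ga (S (S k))) =
  Cnorm2 ga * (Cnorm2 a ^ (S (S k)) / w (S (S k))).
Proof. intros h. rewrite gSS_eq, norm_mul, <- normK by auto. ring. Qed.

Lemma Cscal_D D e z : D <> 0 -> Cmul (Cscal D e) (Cscal (/ D) z) = Cmul e z.
Proof. intros h. cx. f_equal; field; auto. Qed.

Theorem mainTheorem14
  (w : nat -> R)
  (hw_pos : forall n : nat, 0 < w n)
  (hw0 : w 0%nat = 1)
  (hw_ratio : Un_cv (fun n => w (S n) / w n) 1)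
  (a alpha beta gamma : Cx)
  (ha_ne0 : a <> C0) (ha_disc : Cmod a < 1)
  (halpha : alpha <> C0) (hgamma : gamma <> C0)
  (hinner : is_inner w (gcoef w a alpha beta gamma)) :
  eval_is (gcoef w a alpha beta gamma) a C0 /\
  Cadd beta gamma = C0 /\
  (exists c : Cx, Cmod c = 1 /\
     forall n : nat, gcoef w a alpha beta gamma n = Cmul c (B2coef w a n)) /\
  hnorm w (B2num w a) = B2den w a.
Proof.
  destruct hinner as [Hn Hi].
  pose proof (Cnz _ ha_ne0) as hr. pose proof (Cnz _ hgamma) as hg.
  assert (Hex : ex_series (fun n => Cnorm2 a ^ n / w n)).
  { assert (H1 : ex_series (fun n => w n * Cnorm2 (gcoef w a alpha beta gamma n))).
    { exists 1. apply is_series_Reals. exact Hn. }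
    apply (ex_series_incr_n _ 2) in H1.
    apply (ex_series_scal (/ Cnorm2 gamma)) in H1.
    apply (ex_series_incr_n _ 2).
    apply ex_series_ext with (2 := H1). intros k. cbn [Nat.add].
    change (scal (/ Cnorm2 gamma) (w (S (S k)) * Cnorm2 (gcoef w a alpha beta gamma (S (S k)))))
      with (/ Cnorm2 gamma * (w (S (S k)) * Cnorm2 (gcoef w a alpha beta gamma (S (S k))))).
    rewrite (gnormSS w a alpha beta gamma k (hw_pos _)). rewrite <- Rmult_assoc, Rinv_l, Rmult_1_l; [reflexivity| lra]. }
  assert (HK : infinite_sum (fun n => Cnorm2 a ^ n / w n) (Kaa w a)).
  { unfold Kaa, Rseries_val. apply epsilon_spec. exists (Series (fun n => Cnorm2 a ^ n / w n)).
    apply is_series_Reals. apply Series_correct. exact Hex. }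
  pose proof (eval_series w a alpha beta gamma _ HK) as HG.
  set (G := Cadd (Cadd (Cmul alpha a) beta) (Cmul gamma (RtoC (Kaa w a)))) in HG.
  assert (HG0 : G = C0).
  { pose proof (Hi 2%nat ltac:(lia)) as H2. unfold inner_is in H2.
    pose proof (cs_mul (Cmul (Cconj gamma) (Cpow a 2)) _ _ (cs_shift 2 _ _ HG)) as H3.
    apply cs_ext with (v := fun n => Cscal (w n) (Cmul (zshift 2 (gcoef w a alpha beta gamma) n)
      (Cconj (gcoef w a alpha beta gamma n)))) in H3.
    2: { intros n. rewrite term2 by auto. reflexivity. }
    pose proof (cs_uniq _ _ _ H3 H2) as E.
    apply Cmul_eq0 in E; auto. apply Cnz_mul. apply Cnz_conj; auto. apply Cnz_pow; auto. }
  assert (Hbg : Cadd beta gamma = C0).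
  { pose proof (Hi 1%nat ltac:(lia)) as H2. unfold inner_is in H2.
    pose proof (cs_plus _ _ _ _ (cs_mul (Cmul (Cconj gamma) a) _ _ (cs_shift 1 _ _ HG))
       (cs_single 1 (Cmul (gcoef w a alpha beta gamma 0) (Cscal (w 1%nat) (Cconj alpha))))) as H3.
    apply cs_ext with (v := fun n => Cscal (w n) (Cmul (zshift 1 (gcoef w a alpha beta gamma) n)
      (Cconj (gcoef w a alpha beta gamma n)))) in H3.
    2: { intros n. rewrite term1 by auto. reflexivity. }
    pose proof (cs_uniq _ _ _ H3 H2) as E. rewrite HG0 in E.
    rewrite g0_eq in E by auto.
    assert (E2 : Cmul (Cscal (w 1%nat) (Cconj alpha)) (Cadd beta gamma) = C0).
    { assert (Z : forall p q, Cadd (Cmul p C0) q = q) by (intros; cx; f_equal; ring).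
      rewrite Z in E. rewrite Cmul_comm; exact E. }
    apply Cmul_eq0 in E2; auto. apply Cnz_conj in halpha. apply Cnz in halpha.
    pose proof (hw_pos 1%nat). intros E3.
    assert (E4 : Cnorm2 (Cscal (w 1%nat) (Cconj alpha)) = 0)
      by (rewrite E3; unfold Defs.Cnorm2, Defs.C0; simpl; ring).
    rewrite norm_scal in E4.
    assert (0 < w 1%nat * w 1%nat * Cnorm2 (Cconj alpha)) by (apply Rmult_lt_0_compat; [apply Rmult_lt_0_compat|]; auto). lra. }
  assert (Hal : alpha = Cmul (Cmul gamma (RtoC (1 - Kaa w a))) (ainv a))
    by (apply (alpha_eq a alpha beta gamma); auto).
  assert (Hbe : beta = Copp gamma).
  { assert (L : forall b g, Cadd b g = C0 -> b = Copp g)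
      by (intros b g H; cx; injection H; intros; f_equal; lra).
    apply L; auto. }
  pose proof (g_B2 w a alpha beta gamma hw_pos hw0 ha_ne0 Hal Hbe) as HgB.
  set (e := Cmul gamma (ainv a)) in HgB.
  pose proof (norm_series w a hw_pos hw0 HK) as HS.
  set (T := (Kaa w a - 1) * ((Kaa w a - 1) * w 1%nat - Cnorm2 a)) in HS.
  assert (HS1 : Cnorm2 e * T = 1).
  { apply rs_uniq with (u := fun n => w n * Cnorm2 (gcoef w a alpha beta gamma n)); auto.
    apply rs_ext with (2 := rs_scal (Cnorm2 e) _ _ HS). intros n. rewrite HgB, norm_mul. ring. }
  assert (he : 0 < Cnorm2 e).
  { unfold e, ainv. rewrite norm_mul, norm_scal, norm_conj.
    apply Rmult_lt_0_compat; auto. apply Rmult_lt_0_compat; auto.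
    apply Rmult_lt_0_compat; auto; apply Rinv_0_lt_compat; auto. }
  assert (HT : 0 < T).
  { destruct (Rle_lt_dec T 0) as [h|h]; auto.
    pose proof (Rmult_le_compat_l (Cnorm2 e) T 0 (Rlt_le _ _ he) h). lra. }
  set (D := sqrt T).
  assert (HD : D * D = T) by (apply sqrt_sqrt; lra).
  assert (HDp : 0 < D) by (apply sqrt_lt_R0; auto).
  split. { unfold eval_is. rewrite HG0 in HG. exact HG. }
  split. { exact Hbg. }
  split.
  { exists (Cscal D e). split.
    - unfold Cmod. rewrite norm_scal, HD, Rmult_comm, HS1. apply sqrt_1.
    - intros n. rewrite HgB. unfold B2coef. change (B2den w a) with D.
      rewrite Cscal_D; auto. lra. }
  unfold hnorm.
  assert (HR : infinite_sum (fun n => w n * Cnorm2 (B2num w a n))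
     (Rseries_val (fun n => w n * Cnorm2 (B2num w a n)))).
  { unfold Rseries_val. apply epsilon_spec. exists T. exact HS. }
  rewrite (rs_uniq _ _ _ HR HS). reflexivity.
Qed.
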